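(* In the setting below, consider the moment selection criterion $MSC(S)=J_n(S)-h(|S|)\kappa_n$, where $h$ is strictly increasing, $\lim_{n\to\infty}\kappa_n=\infty$ and $\kappa_n=o(n)$, and let the selected moment set be the minimizer of $MSC(S)$ over $S\in\mathscr{S}$. Then $MSC$ selects the full moment set with probability approaching one.
   Context: Setting: $\theta\in\Theta\subseteq\mathbb{R}^r$; $f=(g',h')'$ a $(p+q)$-vector of moment functions; triangular array $\{Z_{ni}\}$ with $E[g(Z_{ni},\theta_0)]=0$, $E[h(Z_{ni},\theta_0)]=n^{-1/2}\tau$, $\{f(Z_{ni},\theta_0)\}$ uniformly integrable, $Z_{ni}\to_dZ_i$ identically distributed (law $Z$); $f_n(\theta)=n^{-1}\sum_if(Z_{ni},\theta)$. $\mathscr{S}$ is a finite collection of moment sets (subsets of the $p+q$ moment conditions, each with $|S|>r$, where $|S|$ is the number of moment conditions) that contains the full moment set of all $p+q$ conditions. For each $S\in\mathscr{S}$ with zero-one selection matrix $\Xi_S$ and weight $\widetilde{W}_S$, $\widehat{\theta}_S=\arg\min_\theta[\Xi_Sf_n(\theta)]'\widetilde{W}_S[\Xi_Sf_n(\theta)]$, and: $\theta_0$ interior to compact $\Theta$; $\widetilde{W}_S\to_pW_S>0$; $W_S\Xi_SE[f(Z,\theta)]=0$ iff $\theta=\theta_0$; $E[f(Z,\theta)]$ continuous; $\sup_\theta\|f_n(\theta)-E[f(Z,\theta)]\|\to_p0$; $f$ a.s. differentiable near $\theta_0$; $\sup_\theta\|\nabla f_n(\theta)-E[\nabla f(Z,\theta)]\|\to_p0$;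 $\sqrt{n}f_n(\theta_0)\to_dM+(0',\tau')'$ with $M\sim N(0,\Omega)$; $F_S'W_SF_S$ invertible, where $F_S=\Xi_S(E[\nabla_\theta g(Z,\theta_0)]',E[\nabla_\theta h(Z,\theta_0)]')'$. $J_n(S)=n[\Xi_Sf_n(\widehat{\theta}_S)]'\widehat{\Omega}_S^{-1}[\Xi_Sf_n(\widehat{\theta}_S)]$ with $\widehat{\Omega}_S^{-1}$ consistent for $\Omega_S^{-1}$, $\Omega_S=\Xi_S\mathrm{Var}[f(Z,\theta_0)]\Xi_S'$ positive definite. *)

(* Defs.v *)
From HB Require Import structures.
From mathcomp Require Import all_boot all_order all_algebra.
From mathcomp Require Import all_classical all_reals all_analysis.
Set Implicit Arguments. Unset Strict Implicit. Unset Printing Implicit Defensive.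
Import Order.TTheory GRing.Theory Num.Theory.
Import numFieldNormedType.Exports.
Local Open Scope classical_set_scope.
Local Open Scope ring_scope.

Section GMMDefs.
Variable R : realType.

(* zero-one selection matrix Xi_S of a moment set S of the k moment
   conditions: row i picks the i-th element (in increasing order) of S *)
Definition selmx k (S : {set 'I_k}) : 'M[R]_(#|S|, k) :=
  \matrix_(i < #|S|, j < k) ((j == enum_val i)%:R).

Definition posdef n (M : 'M[R]_n) : Prop :=
  M^T = M /\ forall x : 'cV[R]_n, x != 0 -> 0 < (x^T *m M *m x) 0 0.

Definition mx_measurable d (T : measurableType d) m n (X : T -> 'M[R]_(m, n)) :=
  forall i j, measurable_fun [set: T] (fun w => X w i j).

Definition borel_rv d (T : measurableType d) (U : topologicalType) (X : T -> U) :=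
  forall O : set U, open O -> measurable (X @^-1` O).

Definition Emx d (T : measurableType d) (P : probability T R) m n
  (X : T -> 'M[R]_(m, n)) : 'M[R]_(m, n) :=
  \matrix_(i, j) fine ('E_P[fun w => X w i j])%E.

Definition varmx d (T : measurableType d) (P : probability T R) k
  (X : T -> 'cV[R]_k) : 'M[R]_k :=
  \matrix_(i, j) fine (covariance P (fun w => X w i 0) (fun w => X w j 0)).

(* P(A_n) -> 0, in outer probability (A_n need not be measurable):
   A_n is covered by measurable B_n with P(B_n) -> 0 *)
Definition prob_to0 d (T : measurableType d) (P : probability T R)
  (A : nat -> set T) : Prop :=
  exists B : nat -> set T,
    (forall n, measurable (B n) /\ A n `<=` B n) /\
    (fun n => P (B n)) @ \oo --> 0%E.

Definition cvg_prob d (T : measurableType d) (P : probability T R) m n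
  (X : nat -> T -> 'M[R]_(m, n)) (c : 'M[R]_(m, n)) : Prop :=
  forall e : R, 0 < e -> prob_to0 P (fun k => [set w | e < `|X k w - c|]).

(* Y is a Gaussian random vector N(mu, Sig) (Cramer-Wold definition: every
   linear combination a Y is univariate normal with mean a mu and variance
   a Sig a', degenerate at a mu when that variance is 0) *)
Definition gaussian_vec d (T : measurableType d) (P : probability T R) k
  (Y : T -> 'cV[R]_k) (mu : 'cV[R]_k) (Sig : 'M[R]_k) : Prop :=
  mx_measurable Y /\
  forall a : 'rV[R]_k,
    let s2 := (a *m Sig *m a^T) 0 0 in
    let m := (a *m mu) 0 0 in
    if 0 < s2 then
      forall A : set R, measurable A ->
        P ((fun w => (a *m Y w) 0 0) @^-1` A) = normal_prob m (Num.sqrt s2) A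
    else P [set w | (a *m Y w) 0 0 = m] = 1%E.

Definition cvg_dist_gauss d (T : measurableType d) (P : probability T R) k
  (X : nat -> T -> 'cV[R]_k) (mu : 'cV[R]_k) (Sig : 'M[R]_k) : Prop :=
  exists (d2 : measure_display) (T2 : measurableType d2)
         (P2 : probability T2 R) (Y : T2 -> 'cV[R]_k),
    gaussian_vec P2 Y mu Sig /\
    forall phi : 'cV[R]_k -> R, continuous phi ->
      (exists M : R, forall x, `|phi x| <= M) ->
      (fun n => 'E_P[phi \o X n])%E @ \oo --> ('E_P2[phi \o Y])%E.

Definition cvg_dist d (T : measurableType d) (P : probability T R)
  d2 (T2 : measurableType d2) (P2 : probability T2 R) (U : topologicalType)
  (X : nat -> T -> U) (Y : T2 -> U) : Prop :=
  forall phi : U -> R, continuous phi ->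
    (exists M : R, forall x, `|phi x| <= M) ->
    (fun n => 'E_P[phi \o X n])%E @ \oo --> ('E_P2[phi \o Y])%E.

Definition grad r k (g : 'rV[R]_r -> 'cV[R]_k) (th : 'rV[R]_r) : 'M[R]_(k, r) :=
  ('J (fun t => (g t)^T) th)^T.

Definition fbar (T U : Type) r k (f : U -> 'rV[R]_r -> 'cV[R]_k)
  (Z : nat -> nat -> T -> U) (n : nat) (th : 'rV[R]_r) (w : T) : 'cV[R]_k :=
  n%:R^-1 *: \sum_(i < n) f (Z n i w) th.

Definition gradbar (T U : Type) r k (f : U -> 'rV[R]_r -> 'cV[R]_k)
  (Z : nat -> nat -> T -> U) (n : nat) (th : 'rV[R]_r) (w : T) : 'M[R]_(k, r) :=
  n%:R^-1 *: \sum_(i < n) grad (f (Z n i w)) th.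

Definition gmm_obj (T U : Type) r k (f : U -> 'rV[R]_r -> 'cV[R]_k)
  (Z : nat -> nat -> T -> U) (S : {set 'I_k}) (Wn : 'M[R]_#|S|)
  (n : nat) (th : 'rV[R]_r) (w : T) : R :=
  let v := selmx S *m fbar f Z n th w in (v^T *m Wn *m v) 0 0.
Arguments gmm_obj {T U r k} f Z S Wn n th w.

Definition Jstat (T U : Type) r k (f : U -> 'rV[R]_r -> 'cV[R]_k)
  (Z : nat -> nat -> T -> U) (S : {set 'I_k}) (that : 'rV[R]_r)
  (Oinv : 'M[R]_#|S|) (n : nat) (w : T) : R :=
  n%:R * gmm_obj f Z S Oinv n that w.

End GMMDefs.
Arguments selmx {R k} S.
Arguments gmm_obj {R T U r k} f Z S Wn n th w.
Arguments Jstat {R T U r k} f Z S that Oinv n w.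

(* Main.v *)
Require Import Defs.
From HB Require Import structures.
From mathcomp Require Import all_boot all_order all_algebra.
From mathcomp Require Import all_classical all_reals all_analysis.
From mathcomp Require Import ring lra measurable_realfun.
Import Order.TTheory GRing.Theory Num.Theory.
Import numFieldNormedType.Exports.
Local Open Scope classical_set_scope.
Local Open Scope ring_scope.

Set Implicit Arguments. Unset Strict Implicit. Unset Printing Implicit Defensive.


Section Alg.
Variable R : realType.

Definition sqv m (x : 'cV[R]_m) : R := \sum_i x i 0 ^+ 2.
Definition qf m (M : 'M[R]_m) (x : 'cV[R]_m) : R := (x^T *m M *m x) 0 0.

Lemma sqv_ge0 m (x : 'cV[R]_m) : 0 <= sqv x.
Proof. by apply: sumr_ge0 => i _; rewrite sqr_ge0. Qed.

Lemma qfE m (M : 'M[R]_m) x :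
  qf M x = \sum_j \sum_i x i 0 * M i j * x j 0.
Proof.
rewrite /qf mxE; apply: eq_bigr => j _; rewrite mxE mulr_suml.
by apply: eq_bigr => i _; rewrite !mxE.
Qed.

Lemma entry_le_norm m n (M : 'M[R]_(m, n)) i j : `|M i j| <= `|M|.
Proof.
by rewrite [leRHS]/Num.Def.normr /= mx_normrE; apply/bigmax_geP; right => /=; exists (i, j).
Qed.

Lemma qf_bound m (M : 'M[R]_m) x : `|qf M x| <= m%:R * `|M| * sqv x.
Proof.
rewrite qfE.
apply: (le_trans (ler_norm_sum _ _ _)).
apply: (@le_trans _ _ (\sum_(j < m) \sum_(i < m) `|M| * ((x i 0 ^+ 2 + x j 0 ^+ 2) / 2))).
  apply: ler_sum => j _; apply: (le_trans (ler_norm_sum _ _ _)).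
  apply: ler_sum => i _; rewrite !normrM.
  have hM := entry_le_norm M i j.
  have h1 : `|x i 0| * `|x j 0| <= (x i 0 ^+ 2 + x j 0 ^+ 2) / 2.
    have := sqr_ge0 (`|x i 0| - `|x j 0|).
    rewrite -[x i 0 ^+ 2]real_normK ?num_real// -[x j 0 ^+ 2]real_normK ?num_real//.
    move=> h; rewrite -subr_ge0.
    have -> : (`|x i 0| ^+ 2 + `|x j 0| ^+ 2) / 2 - `|x i 0| * `|x j 0| =
      (`|x i 0| - `|x j 0|) ^+ 2 / 2 by field.
    by apply: divr_ge0.
  rewrite mulrAC [X in _ <= X]mulrC.
  by apply: ler_pM; [exact: mulr_ge0 | exact: normr_ge0 | exact: h1 | exact: hM].
have -> : \sum_(j < m) \sum_(i < m) `|M| * ((x i 0 ^+ 2 + x j 0 ^+ 2) / 2)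
   = `|M| * (\sum_(j < m) \sum_(i < m) ((x i 0 ^+ 2 + x j 0 ^+ 2) / 2)).
  by rewrite mulr_sumr; apply: eq_bigr => j _; rewrite mulr_sumr.
have -> : \sum_(j < m) \sum_(i < m) ((x i 0 ^+ 2 + x j 0 ^+ 2) / 2) = m%:R * sqv x.
  under eq_bigr do rewrite -mulr_suml big_split /= sumr_const card_ord.
  rewrite -mulr_suml big_split /= sumr_const card_ord -/(sqv x).
  have key : forall a : R, (a *+ m + a *+ m) / 2 = m%:R * a.
    by move=> a; rewrite -[a *+ m]mulr_natr; field.
  by rewrite sumrMnl -/(sqv x) key.
by rewrite mulrA [`|M| * _]mulrC.
Qed.

Lemma qfD m (A B : 'M[R]_m) x : qf (A + B) x = qf A x + qf B x.
Proof. by rewrite /qf mulmxDr mulmxDl mxE. Qed.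

Lemma qfZ m (M : 'M[R]_m) a x : qf M (a *: x) = a ^+ 2 * qf M x.
Proof.
by rewrite /qf -scalemxAr [(a *: x)^T]linearZ /= -!scalemxAl !mxE mulrA -expr2.
Qed.

Lemma qf0 m (M : 'M[R]_m) : qf M 0 = 0.
Proof. by rewrite /qf mulmx0 mxE. Qed.

Lemma bil_sym m (A : 'M[R]_m) (x y : 'cV[R]_m) : A^T = A ->
  (y^T *m A *m x) 0 0 = (x^T *m A *m y) 0 0.
Proof.
move=> hA; transitivity (((y^T *m A *m x : 'M[R]_1)^T) 0 0); first by rewrite [RHS]mxE.
by rewrite !trmx_mul trmxK hA mulmxA.
Qed.

Lemma mxD00 (M N : 'M[R]_1) : (M + N) 0 0 = M 0 0 + N 0 0.
Proof. by rewrite mxE. Qed.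
Lemma mxZ00 a (M : 'M[R]_1) : (a *: M) 0 0 = a * M 0 0.
Proof. by rewrite mxE. Qed.

Lemma qf_add m (A : 'M[R]_m) (x z : 'cV[R]_m) :
  qf A (x + z) = qf A x + (x^T *m A *m z) 0 0 + (z^T *m A *m x) 0 0 + qf A z.
Proof.
rewrite /qf [(x + z)^T]linearD /= !mulmxDl !mulmxDr !mxD00.
by rewrite addrA; congr (_ + _); rewrite -!addrA; congr (_ + _); rewrite addrC.
Qed.

Lemma sqv_eq0 m (x : 'cV[R]_m) : sqv x = 0 -> x = 0.
Proof.
move=> /eqP; rewrite psumr_eq0; last by move=> i _; rewrite sqr_ge0.
move=> /allP h; apply/matrixP => i j; rewrite (ord1 j) mxE.
by have := h i (mem_index_enum i); rewrite implyTb sqrf_eq0 => /eqP.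
Qed.

Lemma CS m (A : 'M[R]_m) (x y : 'cV[R]_m) : A^T = A -> (forall z, 0 <= qf A z) ->
  ((x^T *m A *m y) 0 0) ^+ 2 <= qf A x * qf A y.
Proof.
move=> hA hp.
have E t : qf A (x + t *: y) = qf A x + 2 * t * (x^T *m A *m y) 0 0 + t ^+ 2 * qf A y.
  rewrite qf_add (bil_sym _ _ hA) qfZ [(t *: y)^T]linearZ /= -!scalemxAl mxZ00 (bil_sym _ _ hA); ring.
set a := qf A x; set b := (x^T *m A *m y) 0 0; set c := qf A y.
have ha : 0 <= a by apply: hp.
have hc : 0 <= c by apply: hp.
have key t : 0 <= a + 2 * t * b + t ^+ 2 * c by rewrite -E; apply: hp.
have [c0|cpos] := eqVneq c 0.
  have := key (- (a + 1) / (2 * b)); have [b0|bn0] := eqVneq b 0.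
    by move=> _; rewrite b0 c0 expr0n mulr0.
  rewrite c0 mulr0 addr0 => h; exfalso.
  have e2 : 2 * (- (a + 1) / (2 * b)) * b = - (a + 1) by field.
  by move: h; rewrite e2 opprD addrA subrr add0r oppr_ge0 ler10.
have cp : 0 < c by rewrite lt_neqAle eq_sym cpos hc.
have := key (- b / c).
have -> : a + 2 * (- b / c) * b + (- b / c) ^+ 2 * c = a - b ^+ 2 / c by field; rewrite gt_eqF.
rewrite subr_ge0 ler_pdivrMr //; nra.
Qed.


Lemma sel_entry k (S : {set 'I_k}) (x : 'cV[R]_k) i :
  (selmx S *m x) i 0 = x (enum_val i) 0.
Proof.
rewrite mxE (bigD1 (enum_val i)) //= big1 ?addr0.
  by rewrite /selmx mxE eqxx mul1r.
by move=> j hj; rewrite /selmx mxE (negbTE hj) mul0r.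
Qed.

Lemma term_le_sqv m (x : 'cV[R]_m) j : x j 0 ^+ 2 <= sqv x.
Proof.
rewrite /sqv (bigD1 j) //= lerDl; apply: sumr_ge0 => i _; exact: sqr_ge0.
Qed.

Lemma sqv_sel k (S : {set 'I_k}) (x : 'cV[R]_k) :
  sqv (selmx S *m x) <= #|S|%:R * sqv x.
Proof.
rewrite {1}/sqv; apply: (@le_trans _ _ (\sum_(i < #|S|) sqv x)).
  by apply: ler_sum => i _; rewrite sel_entry term_le_sqv.
by rewrite sumr_const card_ord mulr_natl.
Qed.

Lemma sqvZ m a (x : 'cV[R]_m) : sqv (a *: x) = a ^+ 2 * sqv x.
Proof. by rewrite /sqv mulr_sumr; apply: eq_bigr => i _; rewrite mxE exprMn. Qed.

Lemma posdef_psd m (A : 'M[R]_m) : posdef A -> forall x, 0 <= qf A x.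
Proof.
move=> [_ hA] x; have [->|x0] := eqVneq x 0; first by rewrite qf0.
exact/ltW/hA.
Qed.

Lemma posdef_unit m (A : 'M[R]_m) : posdef A -> A \in unitmx.
Proof.
move=> [hs hA]; rewrite -row_free_unit -kermx_eq0; apply/negPn/negP => /rowV0Pn [v].
move=> /sub_kermxP hv v0.
have := hA v^T; rewrite trmx_eq0 v0 => /(_ isT).
by rewrite /qf trmxK hv mul0mx mxE ltxx.
Qed.

Lemma inv_ident m (A : 'M[R]_m) (x : 'cV[R]_m) : A^T = A -> A \in unitmx ->
  (x^T *m A *m (invmx A *m x)) 0 0 = sqv x /\
  qf A (invmx A *m x) = qf (invmx A) x.
Proof.
move=> hs hu; split.
  rewrite -mulmxA (mulmxA A) mulmxV // mul1mx mxE /sqv.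
  by apply: eq_bigr => i _; rewrite mxE expr2.
rewrite /qf trmx_mul trmx_inv hs -!mulmxA (mulmxA A) mulmxV // mul1mx.
by rewrite mulmxA.
Qed.

Lemma ratio_lemma (s a b K : R) : 0 <= s -> 0 <= a -> 0 <= b -> 0 <= K ->
  s ^+ 2 <= a * b -> b <= K * s -> s <= (K + 1) * a.
Proof.
move=> hs ha hb hK h1 h2.
have [s0|sp] := eqVneq s 0; first by rewrite s0; apply: mulr_ge0 => //; lra.
have sp' : 0 < s by rewrite lt_neqAle eq_sym sp hs.
have h3 : s * s <= a * K * s.
  by rewrite -expr2 (le_trans h1) // -mulrA ler_wpM2l.
have h4 : s <= a * K by rewrite -(ler_pM2r sp').
by apply: (le_trans h4); rewrite mulrDl mul1r mulrC lerDl.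
Qed.

Lemma posdef_lb m (A : 'M[R]_m) : posdef A ->
  exists2 c, 0 < c & forall x, c * sqv x <= qf A x.
Proof.
move=> hA; have hu := posdef_unit hA; have hp := posdef_psd hA.
have hs := hA.1.
set K := m%:R * `|invmx A|.
have hK : 0 <= K by rewrite /K mulr_ge0.
have kp : 0 < K + 1 by rewrite (le_lt_trans hK) // ltrDl ltr01.
exists (K + 1)^-1; first by rewrite invr_gt0.
move=> x; have [e1 e2] := inv_ident x hs hu.
have hcs := CS x (invmx A *m x) hs hp.
rewrite e1 e2 in hcs.
have hb : qf (invmx A) x <= K * sqv x.
  by have := qf_bound (invmx A) x; rewrite -/K => /(le_trans (ler_norm _)).
have hb0 : 0 <= qf (invmx A) x by rewrite -e2.
have := ratio_lemma (sqv_ge0 x) (hp x) hb0 hK hcs hb.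
move=> h; rewrite -(ler_pM2l kp) mulrA mulfV ?gt_eqF // mul1r.
exact: h.
Qed.

Lemma posdef_inv_lb m (A : 'M[R]_m) : posdef A ->
  exists2 c, 0 < c & forall x, c * sqv x <= qf (invmx A) x.
Proof.
move=> hA; have hu := posdef_unit hA; have hp := posdef_psd hA.
have hs := hA.1.
set K := m%:R * `|A|.
have hK : 0 <= K by rewrite /K mulr_ge0.
have kp : 0 < K + 1 by rewrite (le_lt_trans hK) // ltrDl ltr01.
exists (K + 1)^-1; first by rewrite invr_gt0.
move=> x; have [e1 e2] := inv_ident x hs hu.
have hcs := CS x (invmx A *m x) hs hp.
rewrite e1 e2 in hcs.
have hb : qf A x <= K * sqv x.
  by have := qf_bound A x; rewrite -/K => /(le_trans (ler_norm _)).
have hb0 : 0 <= qf (invmx A) x by rewrite -e2.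
rewrite mulrC in hcs.
have := ratio_lemma (sqv_ge0 x) hb0 (hp x) hK hcs hb.
move=> h; rewrite -(ler_pM2l kp) mulrA mulfV ?gt_eqF // mul1r.
exact: h.
Qed.

End Alg.


Section Prob.
Context d (T : measurableType d) (R : realType) (P : probability T R).

Lemma Pfin (A : set T) : measurable A -> (P A \is a fin_num)%E.
Proof.
move=> mA; rewrite ge0_fin_numE ?measure_ge0 //.
exact: (le_lt_trans (probability_le1 P mA) (ltey _)).
Qed.

Definition lim_le (A : nat -> set T) (e : R) :=
  exists C : nat -> set T, (forall n, measurable (C n) /\ A n `<=` C n) /\
    \forall n \near \oo, (P (C n) <= e%:E)%E.

Lemma lim_le_of_to0 A e : prob_to0 P A -> 0 < e -> lim_le A e.
Proof.
move=> [B [hB hc]] e0; exists B; split => //.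
have /fine_cvgP [hfin hf] := hc.
have hlt := cvgr_lt _ hf _ e0.
near=> n.
have hf1 : P (B n) \is a fin_num by near: n; apply: hfin.
have hl : fine (P (B n)) < e by near: n; apply: hlt.
by rewrite -(fineK hf1) lee_fin ltW.
Unshelve. all: by end_near.
Qed.

Lemma lim_leU A B e1 e2 : lim_le A e1 -> lim_le B e2 ->
  lim_le (fun n => A n `|` B n) (e1 + e2).
Proof.
move=> [C [hC hc]] [D [hD hd]]; exists (fun n => C n `|` D n); split.
  move=> n; have [m1 s1] := hC n; have [m2 s2] := hD n.
  by split; [exact: measurableU | exact: setUSS].
apply: filterS2 hc hd => n h1 h2.
apply: (le_trans (measureU2 _ (hC n).1 (hD n).1)).
by rewrite EFinD; apply: leeD.
Qed.

Lemma lim_le_mono A e1 e2 : e1 <= e2 -> lim_le A e1 -> lim_le A e2.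
Proof.
move=> he [C [hC hc]]; exists C; split => //.
near=> n; have h : (P (C n) <= e1%:E)%E by near: n; apply: hc.
by apply: (le_trans h); rewrite lee_fin.
Unshelve. all: by end_near.
Qed.

Lemma lim_le_sub A B e : (forall n, A n `<=` B n) -> lim_le B e -> lim_le A e.
Proof.
move=> hAB [C [hC hc]]; exists C; split => // n.
by have [m s] := hC n; split => //; apply: subset_trans s.
Qed.

Lemma lim_le_ev (Q : nat -> Prop) e : 0 <= e -> (\forall n \near \oo, Q n) ->
  lim_le (fun n => [set w | ~ Q n]) e.
Proof.
move=> e0 hQ; exists (fun n => if `[< Q n >] then set0 else setT); split.
  move=> n; case: (asboolP (Q n)) => q; split => //.
near=> n; have q : Q n by near: n; apply: hQ.
by rewrite (asboolT q) measure0 lee_fin.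
Unshelve. all: by end_near.
Qed.

Lemma lim_le_seq (I : eqType) (s : seq I) (A : I -> nat -> set T) e : 0 <= e ->
  (forall i, i \in s -> lim_le (A i) e) ->
  lim_le (fun n => [set w | exists2 i, i \in s & A i n w]) ((size s)%:R * e).
Proof.
move=> e0; elim: s => [|i s IH] hs.
  exists (fun=> set0); split; first by move=> n; split => // w /= [].
  by near=> n; rewrite measure0 mul0r.
have h1 := hs i (mem_head _ _).
have h2 := IH (fun j hj => hs j (@mem_behead _ (i :: s) j hj)).
have := lim_leU h1 h2; rewrite /= -addn1 natrD mulrDl mul1r addrC.
apply: lim_le_sub => n w [j]; rewrite in_cons => /orP [/eqP -> | hj] hw.
  by left.
by right; exists j.
Unshelve. all: by end_near.
Qed.

Lemma lim_le_to0 A : (forall e, 0 < e -> lim_le A e) -> prob_to0 P A.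
Proof.
move=> h.
have h' : forall k : nat, exists C : nat -> set T,
    (forall n, measurable (C n) /\ A n `<=` C n) /\
    \forall n \near \oo, (P (C n) <= (k.+1%:R^-1)%:E)%E.
  by move=> k; apply: h; rewrite invr_gt0.
have [C hC] := choice h'.
pose D k n := if `[< (P (C k n) <= (k.+1%:R^-1)%:E)%E >] then C k n else setT.
have mD k n : measurable (D k n).
  by rewrite /D; case: ifP => _ //; exact: ((hC k).1 n).1.
exists (fun n => \bigcap_k D k n); split.
  move=> n; split; first exact: bigcapT_measurable.
  move=> w Aw k _; rewrite /D; case: ifP => _ //; exact: ((hC k).1 n).2 w Aw.
apply/fine_cvgP; split.
  by near=> n; apply: Pfin; apply: bigcapT_measurable => k; exact: mD.
apply/cvgr0Pnorm_lt => eps eps0.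
set k := Num.truncn (eps^-1).
have hk : k.+1%:R^-1 < eps.
  rewrite -[X in _ < X]invrK ltf_pV2 ?posrE ?invr_gt0 //; exact: truncnS_gt.
have hev := (hC k).2; near=> n.
have hle : (P (C k n) <= (k.+1%:R^-1)%:E)%E by near: n; apply: hev.
have mB : measurable (\bigcap_k D k n) by apply: bigcapT_measurable.
have hle2 : (P (\bigcap_k D k n) <= (k.+1%:R^-1)%:E)%E.
  apply: (le_trans _ hle); rewrite /D; apply: le_measure; rewrite ?inE //.
    exact: ((hC k).1 n).1.
  by move=> w hw; have := hw k I; rewrite /D (asboolT hle).
rewrite /= ger0_norm ?fine_ge0 ?measure_ge0 //.
rewrite -(fineK (Pfin mB)) lee_fin in hle2.
exact: le_lt_trans hle2 hk.
Unshelve. all: by end_near.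
Qed.

End Prob.


Section Tight.
Variable R : realType.

Lemma cont_sum (U : topologicalType) I (s : seq I) (g : I -> U -> R) :
  (forall i, continuous (g i)) -> continuous (fun x => \sum_(i <- s) g i x).
Proof.
move=> hg; elim: s => [|i s IH].
  have -> : (fun x : U => \sum_(j <- [::]) g j x) = fun=> 0.
    by apply: funext => y; rewrite big_nil.
  move=> x; exact: cvg_cst.
have -> : (fun x => \sum_(j <- i :: s) g j x) = g i + (fun x => \sum_(j <- s) g j x).
  by apply: funext => y; rewrite big_cons.
move=> x; apply: continuousD; [exact: hg | exact: IH].
Qed.

Lemma sqv_cont k : continuous (@sqv R k).
Proof.
rewrite /sqv; apply: cont_sum => i x.
rewrite (_ : (fun y : 'cV[R]_k => y i 0 ^+ 2) = (fun y => y i 0) \* (fun y => y i 0)).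
  by apply: continuousM; apply: coord_continuous.
by apply: funext => y; rewrite expr2.
Qed.

Definition phiM k (M : R) (x : 'cV[R]_k) : R := Num.min 1 (Num.max 0 (sqv x - M)).

Lemma phiM_cont k M : continuous (@phiM k M).
Proof.
move=> x; rewrite /phiM.
apply: (@continuous_min _ _ (fun=> 1) (fun y => Num.max 0 (sqv y - M))).
  exact: cst_continuous.
apply: (@continuous_max _ _ (fun=> 0) (fun y => sqv y - M)).
  exact: cst_continuous.
apply: (@continuousB _ _ _ (@sqv R k) (fun=> M)); [exact: sqv_cont | exact: cst_continuous].
Qed.

Lemma phiM_bnd k M (x : 'cV[R]_k) : 0 <= phiM M x <= 1.
Proof.
rewrite /phiM; apply/andP; split.
  by rewrite le_min ler01 le_max lexx.
by rewrite ge_min lexx.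
Qed.

Lemma meas_gt d (T : measurableType d) (g : T -> R) a :
  measurable_fun setT g -> measurable [set w | a < g w].
Proof.
move=> mg; have := mg measurableT _ (measurable_itv `]a, +oo[).
rewrite setTI; congr measurable; apply/seteqP; split => w /=; by rewrite in_itv /= andbT.
Qed.

Lemma meas_sqv d (T : measurableType d) k (X : T -> 'cV[R]_k) :
  (forall j, measurable_fun setT (fun w => X w j 0)) ->
  measurable_fun setT (fun w => sqv (X w)).
Proof.
move=> hX; rewrite /sqv; apply: measurable_sum => j.
exact: measurable_funX.
Qed.

Lemma meas_phi d (T : measurableType d) k M (X : T -> 'cV[R]_k) :
  (forall j, measurable_fun setT (fun w => X w j 0)) ->
  measurable_fun setT (fun w => phiM M (X w)).
Proof.
move=> hX; rewrite /phiM.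
apply: (@measurable_minr _ _ _ _ (fun=> 1) (fun w => Num.max 0 (sqv (X w) - M))).
  exact: measurable_cst.
apply: (@measurable_maxr _ _ _ _ (fun=> 0) (fun w => sqv (X w) - M)).
  exact: measurable_cst.
apply: measurable_funB; [exact: meas_sqv | exact: measurable_cst].
Qed.


Lemma ev_le_of_cvg0 (u : nat -> \bar R) e : u @ \oo --> 0%E -> 0 < e ->
  \forall n \near \oo, (u n <= e%:E)%E.
Proof.
move=> hc e0; have /fine_cvgP [hfin hf] := hc.
have hlt := cvgr_lt _ hf _ e0.
near=> n.
have hf1 : u n \is a fin_num by near: n; apply: hfin.
have hl : fine (u n) < e by near: n; apply: hlt.
by rewrite -(fineK hf1) lee_fin ltW.
Unshelve. all: by end_near.
Qed.

Lemma tight d (T : measurableType d) (P : probability T R) k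
  (X : nat -> T -> 'cV[R]_k) mu Sig :
  (forall n j, measurable_fun setT (fun w => X n w j 0)) ->
  cvg_dist_gauss P X mu Sig ->
  forall e, 0 < e -> exists M : R, lim_le P (fun n => [set w | M < sqv (X n w)]) e.
Proof.
move=> hX [d2 [T2 [P2 [Y [[mY _] hc]]]]] e e0.
have mYs : measurable_fun setT (fun w => sqv (Y w)) := meas_sqv (fun j => mY j 0).
pose F (m : nat) := [set w | m%:R < sqv (Y w)].
have mF m : measurable (F m) := meas_gt _ mYs.
have hcap : \bigcap_m F m = set0.
  apply/seteqP; split => w // hw.
  have := hw (Num.truncn (sqv (Y w))).+1 I; rewrite /F /= => h.
  by have := truncnS_gt (sqv (Y w)); rewrite ltNge (ltW h).
have hni : nonincreasing_seq F.
  move=> m n mn; apply/subsetPset => w; rewrite /F /=.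
  by apply: le_lt_trans; rewrite ler_nat.
have hconv := nonincreasing_cvg_mu (le_lt_trans (probability_le1 P2 (mF 0)) (ltey _))
   mF (bigcapT_measurable mF) hni.
rewrite hcap measure0 in hconv.
have e20 : 0 < e / 2 by lra.
have hev := ev_le_of_cvg0 hconv e20.
have [m0 hm0] : exists m, (P2 (F m) <= (e / 2)%:E)%E.
  by near \oo => m; exists m; near: m; apply: hev.
pose phi := @phiM k m0%:R.
have hb : exists Mb : R, forall x, `|phi x| <= Mb.
  exists 1 => x; have /andP [h1 h2] := phiM_bnd m0%:R x.
  by rewrite ger0_norm.
have hcv := hc phi (@phiM_cont k m0%:R) hb.
have mphiY : measurable_fun setT (fun w => phi (Y w)) := meas_phi m0%:R (fun j => mY j 0).
have E2ge0 : (0 <= 'E_P2[phi \o Y])%E.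
  rewrite unlock; apply: integral_ge0 => w _; rewrite lee_fin.
  by have /andP [] := phiM_bnd m0%:R (Y w).
have E2le : ('E_P2[phi \o Y] <= (e / 2)%:E)%E.
  apply: le_trans hm0.
  rewrite unlock -(setIT (F m0)) -integral_indic //.
  apply: ge0_le_integral => //.
  - by move=> w _; rewrite lee_fin; have /andP [] := phiM_bnd m0%:R (Y w).
  - by apply/measurable_EFinP.
  - by apply/measurable_EFinP; apply/measurable_indic.
  move=> w _; rewrite lee_fin indicE /= /phi /phiM.
  case: (boolP (w \in F m0)) => hw.
    by rewrite ge_min lexx.
  have hw' : ~ (m0%:R < sqv (Y w)) by move/negP: hw; rewrite in_setE.
  have h : sqv (Y w) <= m0%:R by rewrite leNgt; apply/negP.
  rewrite ge_min; apply/orP; right; rewrite ge_max lexx /=; lra.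
have E2fin : ('E_P2[phi \o Y] \is a fin_num)%E.
  by rewrite ge0_fin_numE // (le_lt_trans E2le) // ltey.
rewrite -(fineK E2fin) in hcv.
have /fine_cvgP [hfin hf] := hcv.
have hE2 : fine ('E_P2[phi \o Y])%E < e.
  by rewrite -lte_fin (fineK E2fin) (le_lt_trans E2le) // lte_fin; lra.
have hlt := cvgr_lt _ hf _ hE2.
exists (m0%:R + 1); exists (fun n => [set w | m0%:R + 1 < sqv (X n w)]); split.
  by move=> n; split => //; apply: meas_gt; apply: meas_sqv (hX n).
near=> n.
have hf1 : ('E_P[phi \o X n] \is a fin_num)%E by near: n; apply: hfin.
have hl : fine ('E_P[phi \o X n])%E < e by near: n; apply: hlt.
have mC : measurable [set w | m0%:R + 1 < sqv (X n w)].
  by apply: meas_gt; apply: meas_sqv (hX n).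
apply: (@le_trans _ _ ('E_P[phi \o X n])%E); last by rewrite -(fineK hf1) lee_fin ltW.
rewrite unlock -(setIT [set w | m0%:R + 1 < sqv (X n w)]) -integral_indic //.
apply: ge0_le_integral => //;
  try (by move=> w _; rewrite lee_fin indicE);
  try (by apply/measurable_EFinP; apply/measurable_indic);
  try (by apply/measurable_EFinP; exact: (meas_phi m0%:R (hX n))).
move=> w _; rewrite lee_fin indicE /= /phi /phiM.
case: (boolP (w \in _)) => hw; last by have /andP [] := phiM_bnd m0%:R (X n w).
have hw' : m0%:R + 1 < sqv (X n w) by move: hw; rewrite in_setE.
rewrite le_min lexx /= le_max; apply/orP; right; lra.
Unshelve. all: by end_near.
Qed.

End Tight.


Section Core.
Variable R : realType.

Lemma qf_abs_le m (A : 'M[R]_m) x : qf A x <= m%:R * `|A| * sqv x.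
Proof. by have := qf_bound A x; rewrite ler_norml => /andP[]. Qed.

Lemma qf_abs_ge m (A : 'M[R]_m) x : - (m%:R * `|A| * sqv x) <= qf A x.
Proof. by have := qf_bound A x; rewrite ler_norml => /andP[]. Qed.

Lemma norm_tri m (A B : 'M[R]_m) d : `|A - B| <= d -> `|A| <= `|B| + d.
Proof.
move=> h; have -> : A = B + (A - B) by rewrite addrC subrK.
by apply: (le_trans (ler_normD _ _)); rewrite lerD2l.
Qed.

Lemma core_S m (Oi c : 'M[R]_m) (v : 'cV[R]_m) (nn cS : R) :
  0 <= nn -> 0 < cS -> (forall x, cS * sqv x <= qf c x) ->
  `|Oi - c| <= cS / (m%:R + 1) -> 0 <= nn * qf Oi v.
Proof.
move=> hn hc hlb hd; apply: mulr_ge0 => //.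
have -> : Oi = c + (Oi - c) by rewrite addrC subrK.
rewrite qfD; have h1 := hlb v; have h2 := qf_abs_ge (Oi - c) v.
have hs := sqv_ge0 v.
have hm : 0 <= m%:R :> R by [].
have h3 : m%:R * `|Oi - c| <= cS.
  apply: (@le_trans _ _ (m%:R * (cS / (m%:R + 1)))); first by rewrite ler_wpM2l.
  rewrite mulrA ler_pdivrMr; last by lra.
  nra.
have : m%:R * `|Oi - c| * sqv v <= cS * sqv v by rewrite ler_wpM2r.
lra.
Qed.

Lemma core_full m (W Wt Oi cF : 'M[R]_m) (v u0 : 'cV[R]_m) (nn B cW dF : R) :
  0 <= nn -> 0 < cW -> (forall x, cW * sqv x <= qf W x) ->
  `|Wt - W| <= cW / (2 * (m%:R + 1)) -> `|Oi - cF| <= dF ->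
  qf Wt v <= qf Wt u0 -> nn * sqv u0 <= B ->
  nn * qf Oi v <= m%:R * (`|cF| + dF) * (2 / cW) *
     (m%:R * (`|W| + cW / (2 * (m%:R + 1))) * B).
Proof.
move=> hn hc hlb hW hO hmin hB.
set d1 := cW / (2 * (m%:R + 1)).
have hm : 0 <= m%:R :> R by [].
have hd1 : 0 <= d1 by rewrite /d1 divr_ge0 //; lra.
have hmd : m%:R * d1 <= cW / 2.
  rewrite /d1 mulrA ler_pdivrMr; last by lra.
  have -> : cW / 2 * (2 * (m%:R + 1)) = cW * (m%:R + 1) by field.
  nra.
have hs := sqv_ge0 v; have hs0 := sqv_ge0 u0.
have hWt := norm_tri hW.
have hnWt : 0 <= `|Wt| by [].
have hup : nn * qf Wt u0 <= m%:R * (`|W| + d1) * B.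
  have h1 := qf_abs_le Wt u0.
  have h2 : m%:R * `|Wt| <= m%:R * (`|W| + d1) by rewrite ler_wpM2l.
  have h3 : nn * qf Wt u0 <= m%:R * `|Wt| * (nn * sqv u0).
    by rewrite mulrCA ler_wpM2l.
  apply: (le_trans h3); apply: (@le_trans _ _ (m%:R * (`|W| + d1) * (nn * sqv u0))).
    by rewrite ler_wpM2r // mulr_ge0.
  by rewrite ler_wpM2l // mulr_ge0 // addr_ge0.
have hlow : cW / 2 * sqv v <= qf Wt v.
  have -> : Wt = W + (Wt - W) by rewrite addrC subrK.
  rewrite qfD; have h1 := hlb v; have h2 := qf_abs_ge (Wt - W) v.
  have h3 : m%:R * `|Wt - W| * sqv v <= m%:R * d1 * sqv v.
    by rewrite ler_wpM2r // ler_wpM2l.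
  have h4 : m%:R * d1 * sqv v <= cW / 2 * sqv v by rewrite ler_wpM2r.
  lra.
have hv : nn * sqv v <= 2 / cW * (m%:R * (`|W| + d1) * B).
  have : cW / 2 * (nn * sqv v) <= m%:R * (`|W| + d1) * B.
    apply: le_trans hup; rewrite mulrCA; apply: le_trans (ler_wpM2l hn (le_trans hlow hmin)).
    by [].
  rewrite -ler_pdivlMl; last by lra.
  by rewrite invf_div.
have hOi := norm_tri hO.
have h1 := qf_abs_le Oi v.
have h3 : nn * qf Oi v <= m%:R * `|Oi| * (nn * sqv v) by rewrite mulrCA ler_wpM2l.
apply: (le_trans h3); rewrite -[X in _ <= X]mulrA; apply: ler_pM.
- by rewrite mulr_ge0.
- by rewrite mulr_ge0.
- by rewrite ler_wpM2l.
- exact: hv.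
Qed.

End Core.

Unset Implicit Arguments. Set Strict Implicit. Set Printing Implicit Defensive.


Theorem theorem10
  (R : realType)
  (* probability space carrying the triangular array *)
  (d : measure_display) (T : measurableType d) (P : probability T R)
  (* probability space carrying the limit Z (with law of Z) *)
  (d' : measure_display) (T' : measurableType d') (P' : probability T' R)
  (* data space *)
  (U : topologicalType)
  (r p q : nat) (Theta : set 'rV[R]_r) (th0 : 'rV[R]_r)
  (f : U -> 'rV[R]_r -> 'cV[R]_(p + q)) (tau : 'cV[R]_q)
  (Z : nat -> nat -> T -> U) (Zl : T' -> U)
  (Sc : {set {set 'I_(p + q)}})
  (Wt : forall S : {set 'I_(p + q)}, nat -> T -> 'M[R]_#|S|)
  (W : forall S : {set 'I_(p + q)}, 'M[R]_#|S|)
  (that : {set 'I_(p + q)} -> nat -> T -> 'rV[R]_r)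
  (Oinv : forall S : {set 'I_(p + q)}, nat -> T -> 'M[R]_#|S|)
  (h : nat -> R) (kappa : nat -> R) :
  (* E f(Z, th), E grad f(Z, th), Omega = Var f(Z, th0) *)
  let Ef := fun th => Emx P' (fun w => f (Zl w) th) in
  let EF := fun th => Emx P' (fun w => grad (f (Zl w)) th) in
  let Omega := varmx P' (fun w => f (Zl w) th0) in
  (* the collection of moment sets *)
  [set: 'I_(p + q)]%SET \in Sc ->
  (forall S, S \in Sc -> (r < #|S|)%N) ->
  (* the triangular array *)
  (forall n i, borel_rv (Z n i)) -> borel_rv Zl ->
  (forall n i th, Theta th -> mx_measurable (fun w => f (Z n i w) th)) ->
  (forall th, Theta th -> mx_measurable (fun w => f (Zl w) th)) ->
  (forall n i, (i < n)%N ->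
     Emx P (fun w => usubmx (f (Z n i w) th0)) = 0) ->
  (forall n i, (i < n)%N ->
     Emx P (fun w => dsubmx (f (Z n i w) th0)) = (Num.sqrt n%:R)^-1 *: tau) ->
  (forall e : R, 0 < e -> exists M : R, forall n i, (i < n)%N ->
     (\int[P]_(w in [set w | (M < `|f (Z n i w) th0|)%R]) (`|f (Z n i w) th0|)%:E
        <= e%:E)%E) ->
  (forall i, cvg_dist P P' (fun n => Z n i) Zl) ->
  (* E f(Z, th) exists, Var f(Z, th0) exists *)
  (forall th, Theta th -> forall j,
     P'.-integrable [set: T'] (fun w => ((f (Zl w) th) j 0)%:E)) ->
  (forall j, P'.-integrable [set: T'] (fun w => (((f (Zl w) th0) j 0) ^+ 2)%:E)) ->
  (* parameter space *)
  compact Theta -> (interior Theta) th0 ->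
  (* weights *)
  (forall S, S \in Sc -> cvg_prob P (Wt S) (W S)) ->
  (forall S, S \in Sc -> posdef (W S)) ->
  (* identification *)
  (forall S, S \in Sc -> forall th, Theta th ->
     (W S *m (selmx S *m Ef th) = 0 <-> th = th0)) ->
  {within Theta, continuous Ef} ->
  (* uniform convergence of the sample moments *)
  (forall e : R, 0 < e -> prob_to0 P (fun n =>
     [set w | exists2 th, Theta th & e < `|fbar f Z n th w - Ef th|])) ->
  (* a.s. differentiability near th0 and uniform convergence of the
     sample gradient on that neighbourhood *)
  (exists N : set 'rV[R]_r, nbhs th0 N /\
     {ae P', forall w, forall th, N th ->
        differentiable (fun t => (f (Zl w) t)^T) th} /\
     (forall n i, {ae P, forall w, forall th, N th ->
        differentiable (fun t => (f (Z n i w) t)^T) th}) /\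
     (forall e : R, 0 < e -> prob_to0 P (fun n =>
        [set w | exists2 th, N th & e < `|gradbar f Z n th w - EF th|]))) ->
  (* CLT: sqrt n f_n(th0) ->_d M + (0', tau')', M ~ N(0, Omega) *)
  cvg_dist_gauss P (fun n w => Num.sqrt n%:R *: fbar f Z n th0 w)
    (col_mx 0 tau) Omega ->
  (* F_S' W_S F_S invertible *)
  (forall S, S \in Sc ->
     let F := selmx S *m EF th0 in (F^T *m W S *m F) \in unitmx) ->
  (* the GMM estimators *)
  (forall S, S \in Sc -> forall n w, Theta (that S n w) /\
     forall th, Theta th ->
       gmm_obj f Z S (Wt S n w) n (that S n w) w <= gmm_obj f Z S (Wt S n w) n th w) ->
  (* Omega_S positive definite, Omegahat_S^-1 consistent for Omega_S^-1 *)
  (forall S, S \in Sc -> posdef (selmx S *m Omega *m (selmx S)^T)) ->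
  (forall S, S \in Sc ->
     cvg_prob P (Oinv S) (invmx (selmx S *m Omega *m (selmx S)^T))) ->
  (* the moment selection criterion *)
  {homo h : a b / (a < b)%N >-> a < b} ->
  (forall M : R, \forall n \near \oo, M < kappa n) ->
  (fun n => kappa n / n%:R) @ \oo --> 0 ->
  let MSC := fun n S w =>
    Jstat f Z S (that S n w) (Oinv S n w) n w - h #|S| * kappa n in
  (* the full moment set is the unique minimiser of MSC w.p.a. 1 *)
  prob_to0 P (fun n => [set w | ~ (forall S, S \in Sc -> S != [set: 'I_(p + q)]%SET ->
                                     MSC n [set: 'I_(p + q)]%SET w < MSC n S w)]).
Proof.
move=> Ef EF Omega hF _ _ _ hmZ _ _ _ _ _ _ _ _ hTh0 hWt hWpd _ _ _ _ hclt _ hmin hOpd hOinv hh hk _ MSC.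
pose F := [set: 'I_(p + q)]%SET.
pose X n w := Num.sqrt n%:R *: fbar f Z n th0 w.
have th0T : Theta th0 := interior_subset hTh0.
have hX : forall n j, measurable_fun setT (fun w => X n w j 0).
  move=> n j; rewrite /X /fbar.
  have -> : (fun w => (Num.sqrt n%:R *: (n%:R^-1 *: \sum_(i < n) f (Z n i w) th0)) j 0) =
     (fun w => Num.sqrt n%:R * (n%:R^-1 * \sum_(i < n) f (Z n i w) th0 j 0)).
    by apply: funext => w; rewrite !mxE summxE.
  apply: measurable_funM; first exact: measurable_cst.
  apply: measurable_funM; first exact: measurable_cst.
  by apply: measurable_sum => i; exact: (hmZ n i th0 th0T j 0).
pose Om S := invmx (selmx S *m Omega *m (selmx S)^T).
apply: lim_le_to0 => e e0.
have e4 : 0 < e / 4 by lra.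
have [M hM] := tight hX hclt e4.
have [cW cW0 hcW] := posdef_lb (hWpd F hF).
have hcf : forall S : {set 'I_(p + q)}, exists c : R, 0 < c /\ (S \in Sc -> forall x, c * sqv x <= qf (Om S) x).
  move=> S; case: (boolP (S \in Sc)) => hS.
    by have [c c0 hc] := posdef_inv_lb (hOpd S hS); exists c; split.
  by exists 1; split => //; rewrite hS.
have [cf hcf'] := choice hcf.
pose m := #|F|.
pose d1 := cW / (2 * (m%:R + 1)).
pose dS S := cf S / (#|S|%:R + 1).
pose M0 := Num.max M 0.
pose K := m%:R * (`|Om F| + dS F) * (2 / cW) * (m%:R * (`|W F| + d1) * (m%:R * M0)).
pose dd := h m - h m.-1.
have d10 : 0 < d1 by rewrite /d1 divr_gt0 //; lra.
have dS0 S : 0 < dS S by rewrite /dS divr_gt0 ?(hcf' S).1 //; lra.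
have M00 : 0 <= M0 by rewrite /M0 le_max lexx orbT.
have K0 : 0 <= K.
  rewrite /K; apply: mulr_ge0; last apply: mulr_ge0; last apply: mulr_ge0 => //.
  - apply: mulr_ge0; last by rewrite divr_ge0 //; lra.
    by apply: mulr_ge0 => //; apply: addr_ge0 => //; apply/ltW.
  - by apply: mulr_ge0 => //; apply: addr_ge0 => //; apply/ltW.
pose G1 n := [set w | M < sqv (X n w)].
pose G2 n := [set w | d1 < `|Wt F n w - W F|].
pose G3 n := [set w | exists2 S, S \in enum Sc & dS S < `|Oinv S n w - Om S|].
pose G4 n := [set w : T | ~ (0 < dd -> K < kappa n * dd)].
have hsz : 0 <= (size (enum Sc))%:R :> R by [].
pose e' := e / (4 * ((size (enum Sc))%:R + 1)).
have e'0 : 0 < e' by rewrite /e' divr_gt0 //; lra.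
have L1 : lim_le P G1 (e / 4) by [].
have L2 : lim_le P G2 (e / 4) by apply: lim_le_of_to0 => //; apply: hWt.
have L3 : lim_le P G3 ((size (enum Sc))%:R * e').
  apply: lim_le_seq; first exact: ltW.
  move=> S; rewrite mem_enum => hS; apply: lim_le_of_to0 => //.
  exact: hOinv.
have L4 : lim_le P G4 0.
  apply: lim_le_ev => //.
  have [dd0|dd0] := ltP 0 dd.
    have := hk (K / dd); apply: filterS => n hn _.
    by rewrite -ltr_pdivrMr.
  by near=> n => h0; exfalso; lra.
have L := lim_leU (lim_leU (lim_leU L1 L2) L3) L4.
have Le : e / 4 + e / 4 + (size (enum Sc))%:R * e' + 0 <= e.
  rewrite /e' addr0.
  have : (size (enum Sc))%:R * (e / (4 * ((size (enum Sc))%:R + 1))) <= e / 4.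
    rewrite mulrA ler_pdivrMr; last by lra.
    have -> : e / 4 * (4 * ((size (enum Sc))%:R + 1)) = e * ((size (enum Sc))%:R + 1) by field.
    by rewrite mulrDr mulr1 [_ * e]mulrC lerDl; exact: ltW.
  lra.
apply: (lim_le_sub _ (lim_le_mono Le L)).
move=> n w hA.
have [g1|g1] := pselect (G1 n w); first by left; left; left.
have [g2|g2] := pselect (G2 n w); first by left; left; right.
have [g3|g3] := pselect (G3 n w); first by left; right.
have [g4|g4] := pselect (G4 n w); first by right.
exfalso; apply: hA => S hS hSF.
have nw1 : sqv (X n w) <= M by rewrite leNgt; apply/negP.
have nw2 : `|Wt F n w - W F| <= d1 by rewrite leNgt; apply/negP.
have nw3 : forall S', S' \in Sc -> `|Oinv S' n w - Om S'| <= dS S'.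
  move=> S' hS'; rewrite leNgt; apply/negP => hc; apply: g3.
  by exists S' => //; rewrite mem_enum.
have nw4 : 0 < dd -> K < kappa n * dd by apply: contrapT.
have nn0 : 0 <= n%:R :> R by [].
have JF : Jstat f Z F (that F n w) (Oinv F n w) n w <= K.
  rewrite /Jstat.
  apply: (core_full (u0 := selmx F *m fbar f Z n th0 w) (B := m%:R * M0) nn0 cW0 hcW nw2 (nw3 F hF)).
    exact: ((hmin F hF n w).2 th0 th0T).
  rewrite -(sqr_sqrtr nn0) -sqvZ scalemxAr -/(X n w).
  apply: (le_trans (sqv_sel _ _)); rewrite ler_wpM2l //.
  by apply: (le_trans nw1); rewrite /M0 le_max lexx.
have JS : 0 <= Jstat f Z S (that S n w) (Oinv S n w) n w.
  rewrite /Jstat; apply: (core_S _ nn0 (hcf' S).1 ((hcf' S).2 hS)).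
  exact: nw3 S hS.
have cS : (#|S| < m)%N by rewrite /m; apply: proper_card; rewrite properT.
have m0 : (0 < m)%N by apply: leq_ltn_trans (leq0n _) cS.
have hdd : 0 < dd by rewrite /dd subr_gt0; apply: hh; rewrite ltn_predL.
have hhS : h #|S| <= h m.-1.
  have : (#|S| <= m.-1)%N by rewrite -ltnS prednK.
  by rewrite leq_eqVlt => /orP [/eqP -> | hl]; [exact: lexx | exact/ltW/hh].
have hK := nw4 hdd.
have kpos : 0 < kappa n.
  by have := le_lt_trans K0 hK; rewrite pmulr_lgt0.
have hmul : kappa n * dd <= kappa n * (h m - h #|S|).
  apply: ler_wpM2l; first exact: ltW kpos.
  by rewrite /dd lerD2l lerN2.
rewrite /MSC -/F -/m.
lra.
Unshelve. all: by end_near.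
Qed.
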